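(* Let $[Z_i(\tau_i,u_i)]_{i=1}^N$ be per-agent return distributions with quantile functions $\theta_i(\tau_i,u_i,w)$, let $\alpha\in(0,1]$, let $\bar u_i=\arg\max_{u_i}\mathrm{VaR}_\alpha[Z_i(\tau_i,u_i)]$ and $\bar{\boldsymbol u}=(\bar u_1,\dots,\bar u_N)$, let $Q_{mix}:\mathbb{R}^N\to\mathbb{R}$ be nondecreasing in each argument (not depending on $\boldsymbol u$), let $\theta_r(\boldsymbol\tau,\boldsymbol u,w)\le0$ for all $\boldsymbol u,w$, and let the mask be $m_\alpha(\boldsymbol\tau,\boldsymbol u)=0$ if $\boldsymbol u=\bar{\boldsymbol u}$ and $1$ otherwise. Let $Z_{jt}(\boldsymbol\tau,\boldsymbol u)$ be a joint return distribution (e.g. represented as a Dirac mixture $\sum_{j=1}^J p_j(\boldsymbol\tau,\boldsymbol u)\delta_{\theta(\boldsymbol\tau,\boldsymbol u,w_j)}$) whose quantile function is $$\theta(\boldsymbol\tau,\boldsymbol u,w)=Q_{mix}(\theta_1(\tau_1,u_1,w),\dots,\theta_N(\tau_N,u_N,w))+m_\alpha(\boldsymbol\tau,\boldsymbol u)\,\theta_r(\boldsymbol\tau,\boldsymbol u,w),\qquad w\in(0,1].$$ Then $[Z_i]_{i=1}^N$ satisfy the RIGM principle for $Z_{jt}$ with risk metric $\mathrm{VaR}_\alpha$, i.e. $\arg\max_{\boldsymbol u}\mathrm{VaR}_\alpha[Z_{jt}(\boldsymbol\tau,\boldsymbol u)]=\bar{\boldsymbol u}$.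
   Context: There are $N$ agents; agent $i$ has observation history $\tau_i$ and finite action set $U_i$; $\boldsymbol\tau=(\tau_1,\dots,\tau_N)$, $\boldsymbol u=(u_1,\dots,u_N)$. For a real random variable $Z$ with CDF $F_Z$, its quantile function is $\theta_Z(\omega)=\inf\{z\in\mathbb{R}:\omega\le F_Z(z)\}$, $\omega\in(0,1]$, and $\mathrm{VaR}_\alpha(Z)=\theta_Z(\alpha)$. RIGM principle: $\arg\max_{\boldsymbol u}\mathrm{VaR}_\alpha[Z_{jt}(\boldsymbol\tau,\boldsymbol u)]=(\arg\max_{u_1}\mathrm{VaR}_\alpha[Z_1(\tau_1,u_1)],\dots,\arg\max_{u_N}\mathrm{VaR}_\alpha[Z_N(\tau_N,u_N)])$. Standing assumption of the paper: argmax sets are singletons (ties broken by smallest index). *)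

(* Defs.v *)
From HB Require Import structures.
From mathcomp Require Import all_boot all_order all_algebra.
From mathcomp Require Import all_classical all_reals.
From mathcomp Require Import topology normedtype.
Set Implicit Arguments. Unset Strict Implicit. Unset Printing Implicit Defensive.
Import numFieldNormedType.Exports.
Import Order.TTheory GRing.Theory Num.Theory.
Local Open Scope classical_set_scope.
Local Open Scope ring_scope.

Definition is_cdf (R : realType) (F : R -> R) : Prop :=
  [/\ (forall x y, x <= y -> F x <= F y),
      (forall x, F z @[z --> x^'+] --> F x),
      F z @[z --> -oo] --> (0 : R)
    & F z @[z --> +oo] --> (1 : R)].

Definition quantile (R : realType) (F : R -> R) (w : R) : R :=
  inf [set z | w <= F z].

Definition VaR (R : realType) (alpha : R) (F : R -> R) : R := quantile F alpha.

Definition argmax_set (R : realType) (X : finType) (f : X -> R) : {set X} :=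
  [set x | [forall y, f y <= f x]].

Definition upd (R : realType) (N : nat) (x : {ffun 'I_N -> R}) (i : 'I_N) (a : R)
  : {ffun 'I_N -> R} := [ffun j => if j == i then a else x j].

(* Main.v *)
Require Import Defs.
From HB Require Import structures.
From mathcomp Require Import all_boot all_order all_algebra.
From mathcomp Require Import all_classical all_reals.
From mathcomp Require Import topology normedtype.
Import Order.TTheory GRing.Theory Num.Theory.
Import numFieldNormedType.Exports.
Local Open Scope ring_scope.

Lemma Qmix_mono (R : realType) (N : nat) (Qmix : {ffun 'I_N -> R} -> R) :
  (forall x i a b, a <= b -> Qmix (upd x i a) <= Qmix (upd x i b)) ->
  forall x y : {ffun 'I_N -> R}, (forall i, x i <= y i) -> Qmix x <= Qmix y.
Proof.
move=> HQ x y Hxy.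
pose z (k : nat) := [ffun i : 'I_N => if (i < k)%N then y i else x i].
suff H : forall k, (k <= N)%N -> Qmix x <= Qmix (z k).
  have -> : y = z N by apply/ffunP => i; rewrite ffunE ltn_ord.
  exact: H.
elim=> [|k IH] Hk.
  have -> : z 0%N = x by apply/ffunP => i; rewrite ffunE ltn0.
  by [].
have Hk' : (k < N)%N by [].
pose i := Ordinal Hk'.
have E1 : z k = upd (z k) i (x i).
  apply/ffunP => j; rewrite !ffunE; case: eqP => [->|//].
  by rewrite /= ltnn.
have E2 : z k.+1 = upd (z k) i (y i).
  apply/ffunP => j; rewrite !ffunE; case: eqP => [->|/eqP ne].
    by rewrite /= ltnSn.
  rewrite ltnS leq_eqVlt.
  have -> : (nat_of_ord j == k) = false.
    by apply/negbTE; apply: contra ne => /eqP h; apply/eqP/val_inj.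
  by [].
apply: (le_trans (IH (ltnW Hk))).
by rewrite E2 {1}E1; apply: HQ.
Qed.

Theorem theorem7 (R : realType) (N : nat)
  (T : 'I_N -> Type) (U : 'I_N -> finType) (tau : forall i, T i)
  (F : forall i, T i -> U i -> R -> R)
  (Fjt : (forall i, T i) -> {dffun forall i : 'I_N, U i} -> R -> R)
  (Qmix : {ffun 'I_N -> R} -> R)
  (theta_r : (forall i, T i) -> {dffun forall i : 'I_N, U i} -> R -> R)
  (alpha : R) (ubar : {dffun forall i : 'I_N, U i}) :
  0 < alpha <= 1 ->
  (forall i t a, is_cdf (F i t a)) ->
  (forall t u, is_cdf (Fjt t u)) ->
  (forall i, argmax_set (fun a => VaR alpha (F i (tau i) a)) = [set ubar i]) ->
  (forall x i a b, a <= b -> Qmix (upd x i a) <= Qmix (upd x i b)) ->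
  (forall u w, 0 < w <= 1 -> theta_r tau u w <= 0) ->
  (forall u w, 0 < w <= 1 ->
     quantile (Fjt tau u) w =
       Qmix [ffun i => quantile (F i (tau i) (u i)) w]
       + (if u == ubar then 0 else 1) * theta_r tau u w) ->
  (exists ustar, argmax_set (fun u => VaR alpha (Fjt tau u)) = [set ustar]) ->
  argmax_set (fun u => VaR alpha (Fjt tau u)) = [set ubar].
Proof.
move=> Ha _ _ Hi HQ Hr Hq [ustar Hs].
have Hal : 0 < alpha <= 1 by [].
have Hbar : ubar \in argmax_set (fun u => VaR alpha (Fjt tau u)).
  rewrite inE; apply/forallP => u.
  rewrite /VaR !Hq // eqxx mul0r addr0.
  apply: le_trans (_ : Qmix [ffun i => quantile (F i (tau i) (u i)) alpha] <= _).
    rewrite gerDl; case: (u == ubar); first by rewrite mul0r.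
    by rewrite mul1r; apply: Hr.
  apply: Qmix_mono => // i; rewrite !ffunE.
  have : ubar i \in argmax_set (fun a => VaR alpha (F i (tau i) a)).
    by rewrite Hi set11.
  by rewrite inE => /forallP /(_ (u i)).
move: Hbar; rewrite Hs inE => /eqP ->; by [].
Qed.
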